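(* Let $(X,d)$ be a separable metric space and $p\ge1$. If $\{\mu_n\}_{n\in\mathbb{N}}$ and $\mu$ in $\mathcal{P}_{p-1}(X)$ satisfy $\mu_n\to\mu$ in $\tau_{\mathrm{w}}^{p-1}$ and $\{\varepsilon_n\}_{n\in\mathbb{N}}$ is any bounded sequence of non-negative real numbers, then there exists a $d$-bounded set $B\subseteq X$ such that $M_p(\mu_n;\varepsilon_n)\subseteq B$ for all $n\in\mathbb{N}$.
   Context: For $r\ge0$, $\mathcal{P}_r(X)$ is the set of Borel probability measures $\mu$ on $(X,d)$ with $\int_X d^r(x,y)\,d\mu(y)<\infty$ for some (equivalently all) $x\in X$; $\mu_n\to\mu$ in $\tau_{\mathrm{w}}^r$ means $\int f\,d\mu_n\to\int f\,d\mu$ for every bounded continuous $f:(X,d)\to\mathbb{R}$ and $\int d^r(x,y)\,d\mu_n(y)\to\int d^r(x,y)\,d\mu(y)$ for all $x\in X$. For $\mu\in\mathcal{P}_{p-1}(X)$, $W_p(\mu,x,x'):=\int_X(d^p(x,y)-d^p(x',y))\,d\mu(y)$ and, for $\varepsilon\ge0$, $M_p(\mu;\varepsilon):=\{x\in X: W_p(\mu,x,x')\le\varepsilon\text{ for all } x'\in X\}$. *)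

(* Defs.v *)
From HB Require Import structures.
From mathcomp Require Import all_boot all_order all_algebra.
From mathcomp Require Import all_classical all_reals all_analysis.
Set Implicit Arguments. Unset Strict Implicit. Unset Printing Implicit Defensive.
Import Order.TTheory GRing.Theory Num.Theory.
Local Open Scope classical_set_scope.
Local Open Scope ring_scope.

Definition is_metric {R : realType} {X : Type} (d : X -> X -> R) : Prop :=
  [/\ forall x y, 0 <= d x y,
      forall x y, d x y = 0 <-> x = y,
      forall x y, d x y = d y x &
      forall x y z, d x z <= d x y + d y z].

Definition d_open {R : realType} {X : Type} (d : X -> X -> R) (U : set X) : Prop :=
  forall x, U x -> exists2 r : R, 0 < r & forall y, d x y < r -> U y.

Definition d_separable {R : realType} {X : Type} (d : X -> X -> R) : Prop :=
  exists D : set X, countable D /\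
    forall x (e : R), 0 < e -> exists2 y, D y & d x y < e.

Definition d_bounded {R : realType} {X : Type} (d : X -> X -> R) (B : set X) : Prop :=
  exists x0 : X, exists r : R, forall x, B x -> d x0 x <= r.

Definition d_continuous {R : realType} {X : Type} (d : X -> X -> R) (f : X -> R) : Prop :=
  forall x (e : R), 0 < e -> exists2 del : R, 0 < del &
    forall y, d x y < del -> `|f x - f y| < e.

Definition bounded_fun {R : realType} {X : Type} (f : X -> R) : Prop :=
  exists M : R, forall x, `|f x| <= M.

Section Wasserstein.
Context {R : realType} {dm : measure_display} {X : measurableType dm}.
Variable d : X -> X -> R.

(* P_r(X): probability measures with finite r-th moment (at some/any point) *)
Definition in_Pr (r : R) (mu : probability X R) : Prop :=
  forall x : X, (\int[mu]_y ((d x y) `^ r)%:E < +oo)%E.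

Definition cvg_tau_w (r : R) (mun : nat -> probability X R) (mu : probability X R) : Prop :=
  (forall f : X -> R, d_continuous d f -> bounded_fun f ->
     ((fun n => \int[mun n]_y (f y)%:E) @ \oo --> \int[mu]_y (f y)%:E)%E) /\
  (forall x : X,
     ((fun n => \int[mun n]_y ((d x y) `^ r)%:E) @ \oo --> \int[mu]_y ((d x y) `^ r)%:E)%E).

Definition Wp (p : R) (mu : probability X R) (x x' : X) : \bar R :=
  \int[mu]_y ((d x y) `^ p - (d x' y) `^ p)%:E.

Definition Mp (p : R) (mu : probability X R) (eps : R) : set X :=
  [set x | forall x' : X, (Wp p mu x x' <= eps%:E)%E].
End Wasserstein.

(* Main.v *)
Require Import Defs.
From HB Require Import structures.
From mathcomp Require Import all_boot all_order all_algebra.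
From mathcomp Require Import all_classical all_reals all_analysis.
From mathcomp Require Import ring lra.
Import Order.TTheory GRing.Theory Num.Theory.
Import numFieldNormedType.Exports.
Local Open Scope classical_set_scope.
Local Open Scope ring_scope.


From mathcomp Require Import measurable_realfun.
Lemma ev_gt (R : realType) (u : nat -> \bar R) (l a : R) :
  (u @ \oo --> l%:E)%E -> a < l -> exists N, forall n, (N <= n)%N -> (a%:E < u n)%E.
Proof.
move=> hu al.
have : \forall n \near \oo, (a%:E < u n)%E.
  apply: (hu [set y | (a%:E < y)%E]); apply/nbhs_EFin.
  have : \forall t \near l, a < t by exact: (@cvgr_gt R R (nbhs l) _ id l cvg_id a al).
  by apply: filterS => t h /=; rewrite lte_fin.
by move=> [N _ hN]; exists N => n hn; apply: hN.
Qed.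

Lemma ev_lt (R : realType) (u : nat -> \bar R) (l a : R) :
  (u @ \oo --> l%:E)%E -> l < a -> exists N, forall n, (N <= n)%N -> (u n < a%:E)%E.
Proof.
move=> hu al.
have : \forall n \near \oo, (u n < a%:E)%E.
  apply: (hu [set y | (y < a%:E)%E]); apply/nbhs_EFin.
  have : \forall t \near l, t < a by exact: (@cvgr_lt R R (nbhs l) _ id l cvg_id a al).
  by apply: filterS => t h /=; rewrite lte_fin.
by move=> [N _ hN]; exists N => n hn; apply: hN.
Qed.

Lemma unif (R : realType) (Q : nat -> R -> Prop) :
  (forall n r r', r <= r' -> Q n r -> Q n r') ->
  (forall n, exists r, Q n r) ->
  (exists N r, forall n, (N <= n)%N -> Q n r) -> exists r, forall n, Q n r.
Proof.
move=> mono hn [N [r0 h0]].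
have fin : forall m, exists r, forall n, (n < m)%N -> Q n r.
  elim=> [|m [r hr]]; first by exists 0 => n.
  have [rm hrm] := hn m.
  exists (Num.max r rm) => n; rewrite ltnS leq_eqVlt => /orP[/eqP ->|hlt].
    by apply: (mono _ rm) => //; rewrite le_max lexx orbT.
  by apply: (mono _ r); [rewrite le_max lexx|apply: hr].
have [r1 hr1] := fin N.
exists (Num.max r0 r1) => n; case: (ltnP n N) => h.
  by apply: (mono _ r1); [rewrite le_max lexx orbT|apply: hr1].
by apply: (mono _ r0); [rewrite le_max lexx|apply: h0].
Qed.

Definition clamp {R : realType} (s : R) := Num.min 1 (Num.max 0 s).

Lemma clampE (R : realType) (s : R) : clamp s = if s <= 0 then 0 else if s <= 1 then s else 1.
Proof.
rewrite /clamp maxEle.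
case: (leP 0 s) => h1; rewrite minEle.
  case: (leP 1 s) => h2; case: (leP s 0) => h3; try case: (leP s 1) => h4; lra.
case: (leP 1 0) => h2; case: (leP s 0) => h3; try case: (leP s 1) => h4; lra.
Qed.

Lemma clampL (R : realType) (s t : R) : `|clamp s - clamp t| <= `|s - t|.
Proof.
rewrite !clampE.
case: (leP s 0); case: (leP t 0); case: (leP s 1); case: (leP t 1) => *;
  rewrite ?subrr ?normr0 ?normr_ge0 //;
  rewrite ler_norml; apply/andP; split; (have [h|h] := leP 0 (s - t);
  [rewrite (ger0_norm h)|rewrite (ltr0_norm h)]); lra.
Qed.
Lemma pw (R : realType) (p a b D : R) : 1 <= p -> 0 <= a -> 0 <= b -> 0 <= D ->
  b - a <= D -> b `^ p - a `^ p <= 2 * p * D * b `^ (p - 1).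
Proof.
move=> p1 a0 b0 D0 hab.
have p0 : 0 < p by lra.
have bp : b `^ p = b * b `^ (p - 1) by rewrite mulr_powRB1.
have w0 : 0 <= b `^ (p - 1) := powR_ge0 _ _.
have ap0 : 0 <= a `^ p := powR_ge0 _ _.
case: (leP b (2 * D)) => hb.
  rewrite bp.
  have : b * b `^ (p - 1) <= 2 * D * b `^ (p - 1) by rewrite ler_wpM2r.
  have : 2 * D * b `^ (p - 1) <= 2 * p * D * b `^ (p - 1).
    have h : 0 <= 2 * D * b `^ (p - 1) by rewrite !mulr_ge0.
    have : 0 <= (p - 1) * (2 * D * b `^ (p - 1)) by rewrite mulr_ge0 //; lra.
    lra.
  lra.
have apos : 0 < a by lra.
have bpos : 0 < b by lra.
set t := b / a.
have hta : t * a = b by rewrite /t divfK // gt_eqF.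
have t0 : 0 < t by rewrite /t divr_gt0.
have hlnt : ln t <= t - 1.
  have := @le_ln1Dx R (t - 1). rewrite subrKC; apply; lra.
have hln : ln t = ln b - ln a by rewrite /t ln_div // posrE.
have hap : a `^ p = b `^ p * expR (- (p * ln t)).
  rewrite /powR !gt_eqF // -expRD; congr expR; rewrite hln; ring.
have he := expR_ge1Dx (- (p * ln t)).
have bp0 : 0 <= b `^ p := powR_ge0 _ _.
have h1 : b `^ p - a `^ p <= p * b `^ p * (t - 1).
  rewrite hap.
  have : b `^ p * (1 + - (p * ln t)) <= b `^ p * expR (- (p * ln t)).
    by rewrite ler_wpM2l.
  have : p * ln t <= p * (t - 1) by rewrite ler_wpM2l //; lra.
  nra.
have h2 : b * (t - 1) <= 2 * D.
  have -> : b * (t - 1) = t * (b - a) by rewrite -hta; ring.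
  have t2 : t < 2 by nra.
  case: (leP 0 (b - a)) => h; nra.
rewrite bp in h1.
have : p * b `^ (p - 1) * (b * (t - 1)) <= p * b `^ (p - 1) * (2 * D).
  by rewrite ler_wpM2l // mulr_ge0 //; lra.
rewrite bp. nra.
Qed.
Lemma int_lower (R : realType) (dm : measure_display) (X : measurableType dm)
  (mu : {measure set X -> \bar R}) (g w v : X -> R) (K : R) :
  measurable_fun setT g -> measurable_fun setT w -> measurable_fun setT v ->
  0 <= K -> (forall y, 0 <= v y) -> (forall y, 0 <= w y) ->
  (forall y, v y <= g y + K * w y) ->
  (\int[mu]_y (w y)%:E < +oo)%E ->
  (\int[mu]_y (v y)%:E - K%:E * \int[mu]_y (w y)%:E <= \int[mu]_y (g y)%:E)%E.
Proof.
move=> mg mw mv K0 v0 w0 hv wfin.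
pose G : X -> \bar R := fun y => (g y)%:E.
have mG : measurable_fun setT G by apply/measurable_EFinP.
have mW : measurable_fun setT (fun y => (K * w y)%:E).
  by apply/measurable_EFinP; apply: measurable_funM => //; exact: measurable_cst.
have mU : measurable_fun setT (fun y => (g y + K * w y)%:E).
  by apply/measurable_EFinP; apply: measurable_funD => //; apply: measurable_funM => //; exact: measurable_cst.
have hW : (\int[mu]_y (K * w y)%:E = K%:E * \int[mu]_y (w y)%:E)%E.
  under eq_integral do rewrite EFinM.
  by rewrite ge0_integralZl_EFin //; [move=> y _; rewrite lee_fin|apply/measurable_EFinP].
have cfin : (\int[mu]_y (K * w y)%:E)%E \is a fin_num.
  rewrite ge0_fin_numE; last by apply: integral_ge0 => y _; rewrite lee_fin mulr_ge0.
  rewrite hW; have [->|Kpos] := eqVneq K 0; first by rewrite mul0e ltry.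
  by rewrite lte_mul_pinfty // ?lee_fin.
have pw y : ((G^\+)%E y + (K * w y)%:E = (g y + K * w y)%:E + (G^\-)%E y)%E.
  rewrite funeposE funenegE /G.
  have [hg|hg] := leP (g y) 0.
    have e1 : (Order.max (g y)%:E 0%E = 0%E)%E by apply/max_idPr; rewrite lee_fin.
    have e2 : (Order.max (- (g y)%:E) 0%E = - (g y)%:E)%E by apply/max_idPl; rewrite lee_fin oppr_ge0.
    rewrite e1 e2 add0e -EFinN -EFinD; congr EFin; ring.
  have e1 : (Order.max (g y)%:E 0%E = (g y)%:E)%E by apply/max_idPl; rewrite lee_fin ltW.
  have e2 : (Order.max (- (g y)%:E) 0%E = 0%E)%E by apply/max_idPr; rewrite lee_fin oppr_le0 ltW.
  by rewrite e1 e2 adde0 -EFinD.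
have hint : (\int[mu]_y (G^\+)%E y + \int[mu]_y (K * w y)%:E =
            \int[mu]_y (g y + K * w y)%:E + \int[mu]_y (G^\-)%E y)%E.
  rewrite -ge0_integralD //; try (by move=> y _; rewrite lee_fin mulr_ge0);
    try exact: measurable_funepos; try exact: measurable_funeneg;
    try (by move=> y _; apply: funepos_ge0); try (by move=> y _; apply: funeneg_ge0).
  rewrite -ge0_integralD //; try (by move=> y _; rewrite lee_fin; have := hv y; have := v0 y; lra);
    try exact: measurable_funepos; try exact: measurable_funeneg;
    try (by move=> y _; apply: funepos_ge0); try (by move=> y _; apply: funeneg_ge0).
  by apply: eq_integral => y _; rewrite pw.
have ble : (\int[mu]_y (G^\-)%E y <= \int[mu]_y (K * w y)%:E)%E.
  apply: ge0_le_integral => //; try exact: measurable_funeneg;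
    try (by move=> y _; apply: funeneg_ge0).
  move=> y _; rewrite funenegE /G; rewrite ge_max; apply/andP; split.
    by rewrite lee_fin; have := hv y; have := v0 y; lra.
  by rewrite lee_fin mulr_ge0.
have bfin : (\int[mu]_y (G^\-)%E y)%E \is a fin_num.
  rewrite ge0_fin_numE; last by apply: integral_ge0 => y _; apply: funeneg_ge0.
  by apply: (le_lt_trans ble); rewrite -ge0_fin_numE // integral_ge0 // => y _; rewrite lee_fin mulr_ge0.
have vle : (\int[mu]_y (v y)%:E <= \int[mu]_y (g y + K * w y)%:E)%E.
  apply: ge0_le_integral => //; try (by apply/measurable_EFinP);
  by move=> y _; rewrite lee_fin.
rewrite [X in (_ <= X)%E]integralE -hW leeBrDr //.
have -> : (\int[mu]_y (G^\+)%E y = \int[mu]_y (g y + K * w y)%:E + \int[mu]_y (G^\-)%E y - \int[mu]_y (K * w y)%:E)%E.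
  by rewrite -hint addeK.
rewrite addeAC; apply: leeD2r; exact: leeD2r.
Qed.
Section S.
Context (R : realType) (dm : measure_display) (X : measurableType dm)
  (d : X -> X -> R) (hd : is_metric d)
  (hborel : (@measurable dm X) = <<s d_open d >>).

Lemma mdist x : measurable_fun setT (d x).
Proof.
have hR : (@measurable _ R) = <<s @measurable_realfun.RGenInftyO.G R >>.
  exact: measurable_realfun.RGenInftyO.measurableE.
apply: (@measurability _ _ _ _ setT (d x) _ hR).
move=> _ [_ [c ->] <-]; rewrite setTI hborel.
apply: sub_sigma_algebra => y /= hy.
have [d0 d01 dsym dtri] := hd.
exists (c - d x y); first by rewrite subr_gt0; move: hy; rewrite /= in_itv.
move=> z hz; rewrite /= in_itv /=.
move: hy; rewrite /= in_itv /= => hy.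
have := dtri x y z; lra.
Qed.

Variable (p : R) (hp : 1 <= p).

Definition ball0 x0 r := [set y | d x0 y <= r].

Lemma mball x0 r : measurable (ball0 x0 r).
Proof.
have hm : measurable (`]-oo, r]%classic : set R) by exact: measurable_itv.
have := mdist x0 measurableT _ hm.
by rewrite setTI; congr measurable; apply/seteqP; split => y /=; rewrite in_itv.
Qed.

Lemma core (P : probability X R) x0 x (r M C c : R) :
  0 <= c -> 0 <= M ->
  ((3/4)%:E < P (ball0 x0 r))%E ->
  (\int[P]_y ((d x0 y) `^ (p - 1))%:E <= M%:E)%E ->
  (Wp d p P x x0 <= C%:E)%E ->
  (forall y, d x0 y <= r ->
     c <= d x y `^ p - d x0 y `^ p + 2 * p * d x0 x * d x0 y `^ (p - 1)) ->
  c * (3/4) - 2 * p * d x0 x * M <= C.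
Proof.
move=> c0 M0 hq hM hW hc.
have [d0 d01 dsym dtri] := hd.
set D := d x0 x.
have D0 : 0 <= D by apply: d0.
have K0 : 0 <= 2 * p * D by apply: mulr_ge0 => //; apply: mulr_ge0 => //; exact: le_trans ler01 hp.
have mg : measurable_fun setT (fun y => d x y `^ p - d x0 y `^ p).
  by apply: measurable_funB; exact: (measurableT_comp (measurable_powR p) (mdist _)).
have mw : measurable_fun setT (fun y => d x0 y `^ (p - 1)).
  exact: (measurableT_comp (measurable_powR (p - 1)) (mdist _)).
have mv : measurable_fun setT (fun y => c * \1_(ball0 x0 r) y).
  apply: measurable_funM; [exact: measurable_cst|apply: measurable_indic; exact: mball].
have := @int_lower R dm X P (fun y => d x y `^ p - d x0 y `^ p)
   (fun y => d x0 y `^ (p - 1)) (fun y => c * \1_(ball0 x0 r) y) (2 * p * D) mg mw mv K0.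
have h1 : forall y, 0 <= c * \1_(ball0 x0 r) y.
  by move=> y; rewrite mulr_ge0 // /indic; case: (_ \in _).
have h2 : forall y, 0 <= d x0 y `^ (p - 1) by move=> y; apply: powR_ge0.
have h3 : forall y, c * \1_(ball0 x0 r) y <=
    d x y `^ p - d x0 y `^ p + 2 * p * D * d x0 y `^ (p - 1).
  move=> y; rewrite /indic; case: (boolP (y \in ball0 x0 r)) => hy.
    by rewrite mulr1; apply: hc; move: hy; rewrite inE.
  rewrite mulr0.
  have := @pw R p (d x y) (d x0 y) D hp (d0 _ _) (d0 _ _) D0.
  have := dtri x0 x y. rewrite -/D => t1 t2.
  have := t2 ltac:(lra). lra.
have h4 : (\int[P]_y (d x0 y `^ (p - 1))%:E < +oo)%E by apply: (le_lt_trans hM); rewrite ltry.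
move=> /(_ h1 h2 h3 h4) hl.
have hv : (\int[P]_y (c * \1_(ball0 x0 r) y)%:E = c%:E * P (ball0 x0 r))%E.
  under eq_integral do rewrite EFinM.
  rewrite ge0_integralZl_EFin //; try (by move=> y _; rewrite lee_fin /indic; case: (_ \in _));
    try (by apply/measurable_EFinP; apply: measurable_indic; exact: mball).
  by rewrite integral_indic ?setIT //; exact: mball.
rewrite hv in hl.
have e1 : ((c * (3/4))%:E <= c%:E * P (ball0 x0 r))%E.
  rewrite EFinM; have c0' : (0 <= c%:E)%E by rewrite lee_fin.
  exact: (lee_wpmul2l c0' (ltW hq)).
have e2 : ((2 * p * D)%:E * \int[P]_y (d x0 y `^ (p - 1))%:E <= (2 * p * D * M)%:E)%E.
  rewrite EFinM; have K0' : (0 <= (2 * p * D)%:E)%E by rewrite lee_fin.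
  exact: (lee_wpmul2l K0' hM).
have := le_trans (leeB e1 e2) (le_trans hl hW).
by rewrite -EFinB lee_fin.
Qed.

Definition bnd (r M C : R) : R :=
  if p == 1 then 4 * C + 6 * r + 1
  else 2 * r + 1 + ((4/3) * (2 * p * M * (1 + r) + 1)) `^ (p - 1)^-1
       + (4/3) * C + r `^ p.

Lemma powle (x y q : R) : 0 <= q -> 0 <= x -> x <= y -> x `^ q <= y `^ q.
Proof.
move=> q0 x0 xy; apply: (ge0_ler_powR q0) => //; rewrite nnegrE //.
exact: le_trans xy.
Qed.

Lemma key (P : probability X R) x0 x (r M C : R) :
  0 <= r -> 0 <= C -> 0 <= M ->
  ((3/4)%:E < P (ball0 x0 r))%E ->
  (\int[P]_y ((d x0 y) `^ (p - 1))%:E <= M%:E)%E ->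
  (Wp d p P x x0 <= C%:E)%E ->
  d x0 x <= bnd r M C.
Proof.
move=> r0 C0 M0 hq hM hW.
have [d0 d01 dsym dtri] := hd.
rewrite leNgt; apply/negP => hD.
have D0 : 0 <= d x0 x by apply: d0.
have hab y : d x0 x - d x0 y <= d x y.
  by have := dtri x0 y x; rewrite (dsym y x); lra.
move: hD; rewrite /bnd; case: eqP => [p1|/eqP pn1] hD.
  have h1 : (\int[P]_y ((d x0 y) `^ (p - 1))%:E <= 1%:E)%E.
    rewrite p1 subrr.
    under eq_integral do rewrite powRr0.
    rewrite integral_cst // mul1e; exact: probability_le1.
  have := @core P x0 x r 1 C (3 * d x0 x - 2 * r) ltac:(lra) ler01 hq h1 hW.
  have : forall y, d x0 y <= r -> 3 * d x0 x - 2 * r <=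
     d x y `^ p - d x0 y `^ p + 2 * p * d x0 x * d x0 y `^ (p - 1).
    move=> y hy; rewrite p1 subrr powRr0 !powRr1 //.
    by have := hab y; lra.
  move=> H /(_ H); rewrite p1; lra.
have p1 : 1 < p by rewrite lt_neqAle eq_sym pn1.
set A := (4/3) * (2 * p * M * (1 + r) + 1).
set E := d x0 x - r.
have A0 : 0 <= A by rewrite /A; apply: mulr_ge0 => //; apply: addr_ge0 => //;
  apply: mulr_ge0 => //; [apply: mulr_ge0 => //; apply: mulr_ge0 => //; lra|lra].
have hr0 : 0 <= r `^ p := powR_ge0 _ _.
have hA0 : 0 <= A `^ (p - 1)^-1 := powR_ge0 _ _.
have E1 : 1 <= E by rewrite /E; lra.
have Er : r <= E by rewrite /E; lra.
have EC : (4/3) * C + r `^ p + 1 <= E by rewrite /E; lra.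
have EA : A <= E `^ (p - 1).
  have hAE : A `^ (p - 1)^-1 <= E by rewrite /E; lra.
  have pm0 : 0 <= p - 1 by rewrite subr_ge0 ltW.
  have := @powle (A `^ (p - 1)^-1) E (p - 1) pm0 hA0 hAE.
  rewrite -powRrM mulVf; last by rewrite subr_eq0. by rewrite powRr1.
have Ep : E `^ p = E * E `^ (p - 1) by rewrite mulr_powRB1 //; lra.
have c0 : 0 <= E `^ p - r `^ p.
  by rewrite subr_ge0; apply: powle => //; lra.
have := @core P x0 x r M C (E `^ p - r `^ p) c0 M0 hq hM hW.
have : forall y, d x0 y <= r -> E `^ p - r `^ p <=
     d x y `^ p - d x0 y `^ p + 2 * p * d x0 x * d x0 y `^ (p - 1).
  move=> y hy.
  have h1 : E `^ p <= d x y `^ p.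
    apply: powle; [lra|lra|rewrite /E; have := hab y; lra].
  have h2 : d x0 y `^ p <= r `^ p by apply: powle; [lra|apply: d0|exact: hy].
  have h3 : 0 <= 2 * p * d x0 x * d x0 y `^ (p - 1).
    by apply: mulr_ge0; [apply: mulr_ge0 => //; lra|apply: powR_ge0].
  lra.
move=> H /(_ H) hc.
have DE : d x0 x = E + r by rewrite /E; ring.
rewrite DE in hc.
have k1 : E * A <= E * E `^ (p - 1) by rewrite ler_wpM2l //; lra.
have k2 : 0 <= p * M * r * (E - 1) by apply: mulr_ge0; [apply: mulr_ge0 => //; apply: mulr_ge0 => //; lra|lra].
rewrite -Ep /A in k1.
nra.
Qed.

Lemma ballP (P : probability X R) x0 : exists k : nat, ((3/4)%:E < P (ball0 x0 k%:R))%E.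
Proof.
have hU : \bigcup_k ball0 x0 k%:R = setT.
  apply/seteqP; split => // y _; exists (Num.truncn (d x0 y)).+1 => //.
  by rewrite /ball0 /=; apply/ltW/truncnS_gt.
have mU : measurable (\bigcup_k ball0 x0 k%:R) by rewrite hU; exact: measurableT.
have nd : nondecreasing_seq (fun k => ball0 x0 k%:R).
  move=> i j ij; apply/subsetPset => y; rewrite /ball0 /= => h.
  by apply: (le_trans h); rewrite ler_nat.
have := @nondecreasing_cvg_mu _ X R P (fun k => ball0 x0 k%:R) (fun k => mball x0 _) mU nd.
rewrite hU => hc.
rewrite [X in _ --> X](_ : _ = 1%E) in hc; last exact: probability_setT.
have [N hN] := @ev_gt R _ 1 (3/4) hc ltac:(lra).
by exists N; apply: (hN N).
Qed.

Lemma mclamp x0 (k : R) : measurable_fun setT (fun y => clamp (k - d x0 y)).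
Proof.
have -> : (fun y => clamp (k - d x0 y)) =
  ((fun _ => 1) \min ((fun _ => 0) \max (fun y => k - d x0 y))).
  by apply/funext => y.
apply: measurable_minr; first exact: measurable_cst.
apply: measurable_maxr; first exact: measurable_cst.
by apply: measurable_funB; [exact: measurable_cst|exact: mdist].
Qed.

Lemma unif_ball (mun : nat -> probability X R) (mu : probability X R) x0 :
  cvg_tau_w d (p - 1) mun mu ->
  exists r, 0 <= r /\ forall n, ((3/4)%:E < mun n (ball0 x0 r))%E.
Proof.
move=> [hc1 _].
have [d0 d01 dsym dtri] := hd.
have [k hk] := ballP mu x0.
pose f y := clamp (k%:R + 1 - d x0 y).
have mf : measurable_fun setT f by exact: mclamp.
have fc : d_continuous d f.
  move=> x e e0; exists e => // y hy.
  rewrite /f; apply: (le_lt_trans (clampL _ _ _)).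
  have h1 := dtri x0 x y; have h2 := dtri x0 y x; rewrite (dsym y x) in h2.
  have -> : k%:R + 1 - d x0 x - (k%:R + 1 - d x0 y) = d x0 y - d x0 x by ring.
  rewrite ltr_norml; apply/andP; split; lra.
have fb : Defs.bounded_fun f.
  exists 1 => y; rewrite /f clampE.
  case: ifP => h0; first by rewrite normr0 ler01.
  case: ifP => h1; last by rewrite normr1.
  have h2 : 0 < k%:R + 1 - d x0 y by rewrite ltNge h0.
  by rewrite ger0_norm // ltW.
have f0 y : 0 <= f y.
  rewrite /f clampE; 
  by case: (leP (k%:R + 1 - d x0 y) 0) => h0 //; case: (leP (k%:R + 1 - d x0 y) 1) => h1 //; lra.
have f1 y : f y <= 1.
  rewrite /f clampE; 
  by case: (leP (k%:R + 1 - d x0 y) 0) => h0 //; case: (leP (k%:R + 1 - d x0 y) 1) => h1 //; lra.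
have fge (PP : probability X R) : (PP (ball0 x0 k%:R) <= \int[PP]_y (f y)%:E)%E.
  rewrite -[ball0 x0 k%:R]setIT -integral_indic; try exact: mball; try exact: measurableT.
  apply: ge0_le_integral => //; try (by move=> y _; rewrite lee_fin /indic; case: (_ \in _));
    try (by apply/measurable_EFinP; apply: measurable_indic; exact: mball);
    try (by apply/measurable_EFinP).
  move=> y _; rewrite lee_fin /indic; case: (boolP (y \in _)) => hy //.
  move: hy; rewrite inE /ball0 /= => hy.
  rewrite /f clampE; 
  by case: (leP (k%:R + 1 - d x0 y) 0) => h0 //; case: (leP (k%:R + 1 - d x0 y) 1) => h1 //; lra.
have fle (PP : probability X R) : (\int[PP]_y (f y)%:E <= PP (ball0 x0 (k%:R + 1)%R))%E.
  rewrite -[ball0 x0 (k%:R + 1)]setIT -integral_indic; try exact: mball; try exact: measurableT.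
  apply: ge0_le_integral => //; try (by move=> y _; rewrite lee_fin /indic; case: (_ \in _));
    try (by apply/measurable_EFinP; apply: measurable_indic; exact: mball);
    try (by apply/measurable_EFinP); try (by move=> y _; rewrite lee_fin; exact: f0).
  move=> y _; rewrite lee_fin /indic; case: (boolP (y \in ball0 x0 (k%:R + 1)%R)) => hy //.
  move: hy; rewrite notin_setE /ball0 /= => /negP; rewrite -ltNge => hy.
  rewrite /f clampE; 
  by case: (leP (k%:R + 1 - d x0 y) 0) => h0 //; case: (leP (k%:R + 1 - d x0 y) 1) => h1 //; lra.
have ffin : (\int[mu]_y (f y)%:E)%E \is a fin_num.
  rewrite ge0_fin_numE; last by apply: integral_ge0 => y _; rewrite lee_fin.
  apply: (@le_lt_trans _ _ (\int[mu]_y (cst 1%:E) y)%E); last first.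
    by rewrite integral_cst // mul1e (le_lt_trans (probability_le1 _ _)) ?ltry.
  apply: ge0_le_integral => //; try (by move=> y _; rewrite lee_fin);
    try (by apply/measurable_EFinP); try exact: measurable_cst.
have hcv := hc1 f fc fb.
rewrite -(fineK ffin) in hcv.
have lt34 : 3/4 < fine (\int[mu]_y (f y)%:E)%E.
  by rewrite -lte_fin fineK //; apply: (lt_le_trans hk); apply: fge.
have [N hN] := @ev_gt R _ _ _ hcv lt34.
pose Q n r := ((3/4)%:E < mun n (ball0 x0 r))%E.
have mono : forall n r r', r <= r' -> Q n r -> Q n r'.
  move=> n r r' rr' h; apply: (lt_le_trans h); apply: le_measure; rewrite ?inE; try exact: mball.
  by move=> y; rewrite /ball0 /= => hy; apply: le_trans rr'.
have pern : forall n, exists r, Q n r.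
  by move=> n; have [k' h] := ballP (mun n) x0; exists k'%:R.
have ev : exists N r, forall n, (N <= n)%N -> Q n r.
  by exists N, (k%:R + 1) => n hn; exact: lt_le_trans (hN n hn) (fle _).
have [r hr] := @unif R Q mono pern ev.
exists (Num.max r 0); split; first by rewrite le_max lexx orbT.
by move=> n; apply: (mono _ r); [rewrite le_max lexx|apply: hr].
Qed.

Lemma unif_M (mun : nat -> probability X R) (mu : probability X R) x0 :
  (forall n, in_Pr d (p - 1) (mun n)) -> in_Pr d (p - 1) mu ->
  cvg_tau_w d (p - 1) mun mu ->
  exists M, 0 <= M /\ forall n, (\int[mun n]_y ((d x0 y) `^ (p - 1))%:E <= M%:E)%E.
Proof.
move=> hmun hmu [_ hc2].
have ge0 (P : probability X R) : (0 <= \int[P]_y ((d x0 y) `^ (p - 1))%:E)%E.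
  by apply: integral_ge0 => y _; rewrite lee_fin powR_ge0.
pose Q n M := (\int[mun n]_y ((d x0 y) `^ (p - 1))%:E <= M%:E)%E.
have mono : forall n r r', r <= r' -> Q n r -> Q n r'.
  by move=> n r r' rr' h; apply: (le_trans h); rewrite lee_fin.
have pern : forall n, exists r, Q n r.
  move=> n; have hf : (\int[mun n]_y ((d x0 y) `^ (p - 1))%:E)%E \is a fin_num.
    by rewrite ge0_fin_numE //; exact: hmun.
  by exists (fine (\int[mun n]_y ((d x0 y) `^ (p - 1))%:E)%E); rewrite /Q fineK.
have hf : (\int[mu]_y ((d x0 y) `^ (p - 1))%:E)%E \is a fin_num.
  by rewrite ge0_fin_numE //; exact: hmu.
have hcv := hc2 x0; rewrite -(fineK hf) in hcv.
have [N hN] := @ev_lt R _ _ (fine (\int[mu]_y ((d x0 y) `^ (p - 1))%:E)%E + 1) hcv ltac:(lra).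
have ev : exists N r, forall n, (N <= n)%N -> Q n r.
  by exists N, (fine (\int[mu]_y ((d x0 y) `^ (p - 1))%:E)%E + 1) => n hn; apply/ltW/hN.
have [r hr] := @unif R Q mono pern ev.
exists (Num.max r 0); split; first by rewrite le_max lexx orbT.
by move=> n; apply: (mono _ r); [rewrite le_max lexx|apply: hr].
Qed.
End S.

Theorem lemma3p6 (R : realType) (dm : measure_display) (X : measurableType dm)
  (d : X -> X -> R) (hd : is_metric d)
  (hborel : (@measurable dm X) = <<s d_open d >>)
  (hsep : d_separable d) (p : R) (hp : 1 <= p)
  (mun : nat -> probability X R) (mu : probability X R)
  (hmun : forall n, in_Pr d (p - 1) (mun n)) (hmu : in_Pr d (p - 1) mu)
  (hcvg : cvg_tau_w d (p - 1) mun mu)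
  (eps : nat -> R) (heps0 : forall n, 0 <= eps n)
  (hepsb : exists C : R, forall n, eps n <= C) :
  exists B : set X, d_bounded d B /\ forall n, Mp d p (mun n) (eps n) `<=` B.
Proof.
pose x0 : X := point.
have [r [r0 hr]] := @unif_ball R dm X d hd hborel p mun mu x0 hcvg.
have [M [M0 hM]] := @unif_M R dm X d p mun mu x0 hmun hmu hcvg.
have [C hC] := hepsb.
pose C' := Num.max C 0.
have C'0 : 0 <= C' by rewrite le_max lexx orbT.
exists [set x | d x0 x <= bnd R p r M C']; split.
  by exists x0, (bnd R p r M C') => x.
move=> n x hx; rewrite /=.
apply: (@key R dm X d hd hborel p hp (mun n) x0 x r M C' r0 C'0 M0 (hr n) (hM n)).
apply: (le_trans (hx x0)); rewrite lee_fin.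
by apply: (le_trans (hC n)); rewrite le_max lexx.
Qed.
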